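(* Let $\mathcal{B}\subseteq\{1,2\}^3$ be a basic set with associated $S_2$-SFT $X^{\mathcal{B}}$ and SNRE sequences $(a_n),(b_n)$, and let $c_n=a_n+b_n$. If the SNRE is of the cooperating type, with $c_n=c_{n-1}^2+g_{n-1}$, then $$h(X^{\mathcal{B}})=\frac14\Big[\ln c_1+\lim_{n\to\infty}\sum_{j=1}^{n-1}2^{-j}\ln\Big(1+\frac{g_j}{c_j^2}\Big)\Big].$$
   Context: $S_2$ is the free semigroup on two generators, identified with finite words over $\{1,2\}$ (root $\epsilon$). Alphabet $\mathcal{A}=\{1,2\}$; a basic set $\mathcal{B}\subseteq\mathcal{A}^3$ is a set of admissible 2-blocks $(i,i_1,i_2)$, $X^{\mathcal{B}}$ the associated $S_2$-SFT. $a_n$ (resp. $b_n$) is the number of maps $u$ from words of length $\le n$ to $\mathcal{A}$ with $(u(w),u(w1),u(w2))\in\mathcal{B}$ for all words $w$ of length $\le n-1$ and $u(\epsilon)=1$ (resp. $2$); equivalently $a_0=b_0=1$, $a_n=F^{(a)}(a_{n-1},b_{n-1})$, $b_n=F^{(b)}(a_{n-1},b_{n-1})$ with $F^{(a)}(x,y)=\sum_{(1,i,j)\in\mathcal{B}}z_iz_j$, $F^{(b)}(x,y)=\sum_{(2,i,j)\in\mathcal{B}}z_iz_j$, $z_1=x,z_2=y$. Entropy: $h(X^{\mathcal{B}})=\limsup_{n}\frac{\ln(a_n+b_n)}{2^{n+1}-1}$ (known to be a limit). The SNRE is of cooperating type if $c_n=c_{n-1}^2+g_{n-1}$ for all $n\ge2$,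 where $g_{m}=G(a_m,b_m)$ for a polynomial $G$ with nonnegative integer coefficients, and $g_m\le c_m^2$ for all $m$. *)

(* Defs.v *)
From Stdlib Require Import Reals Arith List.
From Coquelicot Require Import Coquelicot.
Import ListNotations.
Open Scope R_scope.

(* A basic set B ⊆ {1,2}^3 is given by a boolean predicate on triples of
   naturals; only its values on {1,2}^3 are ever consulted. *)
Definition basic_set := nat -> nat -> nat -> bool.

Definition zsel (i x y : nat) : nat := if Nat.eqb i 1 then x else y.

Definition Fpoly (B : basic_set) (k x y : nat) : nat :=
  fold_right Nat.add 0%nat
    (map (fun ij : nat * nat =>
            if B k (fst ij) (snd ij) then (zsel (fst ij) x y * zsel (snd ij) x y)%nat
            else 0%nat)
         [(1,1); (1,2); (2,1); (2,2)]%nat).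

Fixpoint snre (B : basic_set) (n : nat) : nat * nat :=
  match n with
  | O => (1%nat, 1%nat)
  | S m => let (x, y) := snre B m in (Fpoly B 1 x y, Fpoly B 2 x y)
  end.

Definition a_seq (B : basic_set) (n : nat) : nat := fst (snre B n).
Definition b_seq (B : basic_set) (n : nat) : nat := snd (snre B n).
Definition c_seq (B : basic_set) (n : nat) : nat := (a_seq B n + b_seq B n)%nat.

Definition entropy (B : basic_set) : Rbar :=
  LimSup_seq (fun n => ln (INR (c_seq B n)) / (2 ^ (S n) - 1)).

(* A polynomial in two variables with nonnegative integer coefficients,
   given as a list of monomials (coefficient, exponent of x, exponent of y). *)
Definition natpoly2 := list (nat * nat * nat).

Definition eval_natpoly2 (G : natpoly2) (x y : nat) : nat :=
  fold_right Nat.add 0%nat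
    (map (fun m : nat * nat * nat =>
            let '(c, i, j) := m in (c * x ^ i * y ^ j)%nat) G).

Definition cooperating (B : basic_set) (G : natpoly2) : Prop :=
  (forall n : nat, (2 <= n)%nat ->
     c_seq B n = (c_seq B (n - 1) ^ 2 + eval_natpoly2 G (a_seq B (n - 1)) (b_seq B (n - 1)))%nat)
  /\ (forall m : nat, (eval_natpoly2 G (a_seq B m) (b_seq B m) <= c_seq B m ^ 2)%nat).

Definition g_seq (B : basic_set) (G : natpoly2) (m : nat) : nat :=
  eval_natpoly2 G (a_seq B m) (b_seq B m).

Definition Rsum_range (m k : nat) (f : nat -> R) : R :=
  fold_right Rplus 0 (map f (seq m k)).

(* Main.v *)
Require Import Defs.
From Stdlib Require Import Reals Arith List Lia Lra.
From Coquelicot Require Import Coquelicot.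
Open Scope R_scope.

Lemma Rsum_range_S m k f :
  Rsum_range m (S k) f = Rsum_range m k f + f (m + k)%nat.
Proof.
  unfold Rsum_range. rewrite seq_S, map_app, fold_right_app. simpl.
  generalize (map f (seq m k)). induction l; simpl; [lra|]. rewrite IHl. lra.
Qed.

Lemma Fpoly00 B k : Fpoly B k 0 0 = 0%nat.
Proof.
  unfold Fpoly, zsel; simpl. destruct (B k 1%nat 1%nat), (B k 1%nat 2%nat),
   (B k 2%nat 1%nat), (B k 2%nat 2%nat); reflexivity.
Qed.

Lemma ln0 : ln 0 = 0.
Proof. unfold ln. case (Rlt_dec 0 0); intro h; [exfalso; exact (Rlt_irrefl 0 h)|reflexivity]. Qed.

Lemma recur B G (H : cooperating B G) n (hn : (1 <= n)%nat) :
  ln (INR (c_seq B (S n))) = 2 * ln (INR (c_seq B n)) +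
     ln (1 + INR (g_seq B G n) / (INR (c_seq B n)) ^ 2).
Proof.
  destruct H as [H1 _].
  assert (E := H1 (S n) ltac:(lia)). replace (S n - 1)%nat with n in E by lia.
  fold (g_seq B G n) in E.
  destruct (Nat.eq_dec (c_seq B n) 0) as [Z|Z].
  - assert (Hs : snre B n = (0%nat,0%nat)).
    { unfold c_seq, a_seq, b_seq in Z. destruct (snre B n) as [x y]; simpl in Z.
      f_equal; lia. }
    assert (Z' : c_seq B (S n) = 0%nat).
    { unfold c_seq, a_seq, b_seq. simpl. rewrite Hs. rewrite !Fpoly00. reflexivity. }
    assert (g_seq B G n = 0%nat) by (rewrite Z, Z' in E; simpl in E; lia).
    rewrite Z, Z', H. simpl. rewrite ln0. unfold Rdiv. rewrite Rmult_0_l, Rplus_0_r, ln_1. lra.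
  - rewrite E, plus_INR, pow_INR.
    assert (Hc : 0 < INR (c_seq B n)) by (apply lt_0_INR; lia).
    assert (Hg : 0 <= INR (g_seq B G n)) by apply pos_INR.
    replace (INR (c_seq B n) ^ 2 + INR (g_seq B G n)) with
      ((INR (c_seq B n) * INR (c_seq B n)) * (1 + INR (g_seq B G n) / INR (c_seq B n) ^ 2))
      by (field; lra).
    rewrite ln_mult, ln_mult; try lra; try nra.
    apply Rplus_lt_le_0_compat; [lra|]. apply Rdiv_le_0_compat; [lra| nra].
Qed.

Theorem proposition4 (B : basic_set) (G : natpoly2) :
  cooperating B G ->
  exists L : R,
    is_lim_seq
      (fun n : nat =>
         Rsum_range 1 (n - 1)
           (fun j : nat => / 2 ^ j *
              ln (1 + INR (g_seq B G j) / (INR (c_seq B j)) ^ 2)))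
      L
    /\ entropy B = Finite (/ 4 * (ln (INR (c_seq B 1)) + L)).
Proof.
  intros H.
  set (f' := fun j => ln (1 + INR (g_seq B G j) / (INR (c_seq B j)) ^ 2)).
  set (f := fun j : nat => / 2 ^ j * f' j).
  set (T := fun k => Rsum_range 1 k f).
  set (u := fun n => ln (INR (c_seq B n))).
  assert (f'b : forall j, 0 <= f' j <= 1).
  { intro j. unfold f'.
    assert (Hg : 0 <= INR (g_seq B G j)) by apply pos_INR.
    assert (Hc : 0 <= INR (c_seq B j)) by apply pos_INR.
    assert (Hx : 0 <= INR (g_seq B G j) / INR (c_seq B j) ^ 2 <= 1).
    { destruct (Req_dec (INR (c_seq B j)) 0) as [Z|Z].
      - rewrite Z. simpl. unfold Rdiv. rewrite Rmult_0_l, Rinv_0, Rmult_0_r. lra.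
      - assert (Hle : INR (g_seq B G j) <= INR (c_seq B j) ^ 2).
        { rewrite <- pow_INR. apply le_INR. apply (proj2 H). }
        assert (Hc' : 0 < INR (c_seq B j)) by (destruct Hc; [assumption| congruence]).
        assert (Hc2 : 0 < INR (c_seq B j) ^ 2) by (apply pow_lt; lra).
        split. apply Rdiv_le_0_compat; lra.
        apply (proj1 (Rdiv_le_1 _ _ Hc2)); lra. }
    split. rewrite <- ln_1. apply ln_le; lra.
    apply Rle_trans with (ln 2). apply ln_le; lra.
    assert (ln 2 < 1). { rewrite <- ln_exp with 1. apply ln_increasing. lra.
      pose proof exp_ineq1 1. lra. } lra. }
  assert (fb : forall j, 0 <= f j <= / 2 ^ j).
  { intro j. unfold f. assert (0 < / 2 ^ j) by (apply Rinv_0_lt_compat, pow_lt; lra).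
    destruct (f'b j). split; nra. }
  assert (TS : forall k, T (S k) = T k + f (S k)).
  { intro k. unfold T. rewrite Rsum_range_S. reflexivity. }
  assert (Tb : forall k, T k <= 1 - / 2 ^ k).
  { induction k. unfold T, Rsum_range. simpl. lra.
    rewrite TS. destruct (fb (S k)). simpl in *.
    rewrite Rinv_mult in *. lra. }
  assert (Tex : ex_finite_lim_seq T).
  { apply ex_finite_lim_seq_incr with 1.
    intro n. rewrite TS. destruct (fb (S n)). lra.
    intro n. pose proof (Tb n). assert (0 < / 2 ^ n) by (apply Rinv_0_lt_compat, pow_lt; lra). lra. }
  destruct Tex as [L HL].
  exists L. split.
  { apply is_lim_seq_incr_1. eapply is_lim_seq_ext; [|exact HL].
    intro n. unfold T. f_equal. lia. }
  assert (Hu : forall k, u (S k) = 2 ^ k * (u 1%nat + T k)).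
  { induction k. unfold T, Rsum_range. simpl. lra.
    unfold u. rewrite (recur B G H (S k) ltac:(lia)). fold (u (S k)). rewrite IHk, TS.
    unfold f. fold (f' (S k)). simpl. unfold u. field. apply pow_nonzero. lra. }
  unfold entropy. apply is_LimSup_seq_unique. apply is_lim_LimSup_seq.
  apply is_lim_seq_incr_1.
  eapply is_lim_seq_ext with (u := fun k => (u 1%nat + T k) / (4 - (/2) ^ k)).
  { intro k. change (ln (INR (c_seq B (S k)))) with (u (S k)). rewrite (Hu k).
    assert (1 <= 2 ^ k) by (apply pow_R1_Rle; lra).
    replace (2 ^ S (S k)) with (4 * 2 ^ k) by (simpl; ring).
    rewrite pow_inv. set (X := u 1%nat + T k).
    replace (4 - / 2 ^ k) with ((4 * 2 ^ k - 1) / 2 ^ k) by (field; lra).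
    field. lra. }
  replace (/ 4 * (ln (INR (c_seq B 1)) + L)) with ((u 1%nat + L) / (4 - 0)) by (unfold u; field).
  apply is_lim_seq_div'.
  - apply is_lim_seq_plus'. apply is_lim_seq_const. exact HL.
  - apply is_lim_seq_minus'. apply is_lim_seq_const. apply is_lim_seq_geom. rewrite Rabs_pos_eq; lra.
  - lra.
Qed.
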